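(* Let $Y$ be a polygonal complex and let $G(Y)$ be a developable complex of groups over $Y$ whose universal cover is Bourdon's building $I_{p,v}$. Then the indexing $\mathrm{Ind}_{G(Y)}$ induced by $G(Y)$ is $v$-thick.
   Context: Let $Y'$ be the first barycentric subdivision of $Y$. Its vertices are barycenters of cells of $Y$. Each edge $a$ of $Y'$ joins the barycenters of cells $\tau \subsetneq \tau'$ and is oriented from $i(a) = \tau'$ to $t(a) = \tau$. A complex of groups $G(Y)$ assigns: - a group $G_\tau$ to each vertex of $Y'$; - a monomorphism $\psi_a : G_{i(a)} \to G_{t(a)}$ to each edge $a$; - twisting elements $g_{a,b} \in G_{t(a)}$ for composable pairs, satisfying $\mathrm{Ad}(g_{a,b})\psi_{ab} = \psi_a\psi_b$. An action without inversions of a group on a simply connected polygonal complex $X$ induces a complex of groups over the quotient, with local groups the stabilizers of chosen lifts of cells. $G(Y)$ is developable if it is isomorphic to a complex of groups arising in this way; $X$ is then its universal cover. For $p \geq 5$ and $v \geq 2$, Bourdon's building $I_{p,v}$ is the unique simply connected polygonal $2$-complex whose $2$-cells are regular right-angled hyperbolic $p$-gons and whose vertex links are $K_{v,v}$; it is locally finite, so all indices below are finite. The induced indexing assigns to each edge $a$ of $Y'$ the integer $\mathrm{Ind}_{G(Y)}(a) = |G_{t(a)} : \psi_a(G_{i(a)})|$. An indexing $\mathrm{Ind}$ of $Y'$ (a positive integer for each edge of $Y'$) is $v$-thick if, for every vertex $\sigma$ of $Y'$ that is the midpoint of an edge of $Y$, $\sum_{a : t(a) = \sigma} \mathrm{Ind}(a)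 = v$. *)

(* Defs.v *)
From Stdlib Require Import Relations List.
From mathcomp Require Import ssreflect ssrfun ssrbool eqtype ssrnat seq fintype.

Set Implicit Arguments.
Unset Strict Implicit.
Unset Printing Implicit Defensive.

Record group := Group {
  gcar :> Type;
  gmul : gcar -> gcar -> gcar;
  gone : gcar;
  ginv : gcar -> gcar;
  gmulA : forall x y z, gmul x (gmul y z) = gmul (gmul x y) z;
  gmul1g : forall x, gmul gone x = x;
  gmulVg : forall x, gmul (ginv x) x = gone }.

Arguments gmul {g}.
Arguments gone {g}.
Arguments ginv {g}.

Definition gconj (G : group) (g x : G) : G := gmul (gmul g x) (ginv g).

Definition is_hom (G H : group) (f : G -> H) : Prop :=
  forall x y, f (gmul x y) = gmul (f x) (f y).

Definition is_mono (G H : group) (f : G -> H) : Prop :=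
  is_hom f /\ injective f.

(** [index_is G P n]: the subgroup P (given as a predicate) has finite index
    n in G, i.e. there are exactly n left cosets r_k P. *)
Definition index_is (G : group) (P : G -> Prop) (n : nat) : Prop :=
  exists r : 'I_n -> G,
    (forall g : G, exists k, P (gmul (ginv (r k)) g)) /\
    (forall k l, P (gmul (ginv (r k)) (r l)) -> k = l).

(** * Combinatorial polygonal complexes *)

(** Vertices, edges (each with two endpoints [evert e false], [evert e true],
    possibly equal) and faces; face [f] is a polygon with [nsides f] sides,
    side [i] being the oriented edge [side f i = (e, b)] traversed from
    [evert e b] to [evert e (~~ b)]; consecutive sides (cyclically) match. *)
Record polycx := PolyCx {
  Vt : Type;
  Ed : Type;
  Fc : Type;
  evert : Ed -> bool -> Vt;
  nsides : Fc -> nat;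
  side : forall f, 'I_(nsides f) -> Ed * bool;
  nsides_ge3 : forall f, 2 < nsides f;
  side_closed : forall f (i : 'I_(nsides f)),
    evert (side i).1 (~~ (side i).2) = evert (side (ordS i)).1 (side (ordS i)).2 }.

Arguments evert {p}.
Arguments nsides {p}.
Arguments side {p f}.

Section PolyCx.
Variable K : polycx.

Definition ostart (o : Ed K * bool) : Vt K := evert o.1 o.2.
Definition oend (o : Ed K * bool) : Vt K := evert o.1 (~~ o.2).
Definition oflip (o : Ed K * bool) : Ed K * bool := (o.1, ~~ o.2).

Definition corner (f : Fc K) (i : 'I_(nsides f)) : Vt K := ostart (side i).

Fixpoint is_path (x : Vt K) (l : seq (Ed K * bool)) (y : Vt K) : Prop :=
  match l with
  | [::] => x = y
  | o :: l' => ostart o = x /\ is_path (oend o) l' y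
  end.

Definition face_loop (f : Fc K) (i : 'I_(nsides f)) : seq (Ed K * bool) :=
  rot i (map (@side K f) (enum 'I_(nsides f))).

Inductive htpy_step (x : Vt K) : seq (Ed K * bool) -> seq (Ed K * bool) -> Prop :=
| hs_back l1 l2 z (o : Ed K * bool) :
    is_path x l1 z -> ostart o = z ->
    htpy_step x (l1 ++ l2) (l1 ++ [:: o; oflip o] ++ l2)
| hs_face l1 l2 z (f : Fc K) (i : 'I_(nsides f)) :
    is_path x l1 z -> corner i = z ->
    htpy_step x (l1 ++ l2) (l1 ++ face_loop i ++ l2).

Definition homotopic (x : Vt K) := clos_refl_sym_trans _ (htpy_step x).

Definition simply_connected : Prop :=
  inhabited (Vt K) /\
  (forall x y, exists l, is_path x l y) /\
  (forall x l, is_path x l x -> homotopic x l [::]).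

(** The link at [x]: its vertices are the edge-ends at [x] (oriented edges
    starting at [x]); its edges are the corners of faces at [x]: the corner of
    [f] between side [i] and side [ordS i] joins [oflip (side i)] and
    [side (ordS i)].  [link_Kvv v x]: this link is the complete bipartite
    (simple) graph K_{v,v}. *)
Definition link_Kvv (v : nat) (x : Vt K) : Prop :=
  exists phi : Ed K * bool -> bool * 'I_v,
    (forall o o', ostart o = x -> ostart o' = x -> phi o = phi o' -> o = o') /\
    (forall lbl, exists o, ostart o = x /\ phi o = lbl) /\
    let lab1 (c : {f : Fc K & 'I_(nsides f)}) := phi (oflip (side (projT2 c))) in
    let lab2 (c : {f : Fc K & 'I_(nsides f)}) := phi (side (ordS (projT2 c))) in
    let key c := if (lab1 c).1 then ((lab2 c).2, (lab1 c).2)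
                 else ((lab1 c).2, (lab2 c).2) in
    (forall c, oend (side (projT2 c)) = x -> (lab1 c).1 <> (lab2 c).1) /\
    (forall c c', oend (side (projT2 c)) = x -> oend (side (projT2 c')) = x ->
        key c = key c' -> c = c') /\
    (forall k : 'I_v * 'I_v, exists c, oend (side (projT2 c)) = x /\ key c = k).

End PolyCx.

(** Bourdon's building I_{p,v}, characterised combinatorially (up to
    isomorphism, by Bourdon's uniqueness theorem): a simply connected
    polygonal 2-complex with embedded cells, all faces p-gons, all vertex
    links K_{v,v}. *)
Definition is_bourdon (p v : nat) (X : polycx) : Prop :=
  (forall e : Ed X, evert e true <> evert e false) /\
  (forall f : Fc X, nsides f = p) /\
  (forall f : Fc X, injective (@corner X f)) /\
  (forall f : Fc X, injective (fun i : 'I_(nsides f) => (side i).1)) /\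
  (forall x : Vt X, link_Kvv v x) /\
  simply_connected X.

(** * Scwols (small categories without loops), with a dimension function *)

Record scwol := Scwol {
  sV : Type;
  sE : Type;
  sdim : sV -> nat;
  si : sE -> sV;
  st : sE -> sV;
  scomp : sE -> sE -> sE -> Prop;   (* scomp a b c : c = a b (a after b) *)
  scomp_ti : forall a b c, scomp a b c -> st b = si a;
  scomp_i : forall a b c, scomp a b c -> si c = si b;
  scomp_t : forall a b c, scomp a b c -> st c = st a }.

Arguments sdim {s}.
Arguments si {s}.
Arguments st {s}.
Arguments scomp {s}.

(** First barycentric subdivision K' of a polygonal complex K.
    Vertices: barycenters of cells; edges: incidences tau < tau', oriented
    from tau' to tau (with multiplicity). *)
Section Sd.
Variable K : polycx.

Inductive sdV : Type :=
| SV of Vt K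
| SE of Ed K
| SF of Fc K.

Inductive sdE : Type :=
| EV of Ed K & bool
| FE (f : Fc K) of 'I_(nsides f)
| FV (f : Fc K) of 'I_(nsides f).

Definition sd_dim (x : sdV) : nat :=
  match x with SV _ => 0 | SE _ => 1 | SF _ => 2 end.

Definition sd_si (a : sdE) : sdV :=
  match a with EV e _ => SE e | FE f _ => SF f | FV f _ => SF f end.

Definition sd_st (a : sdE) : sdV :=
  match a with
  | EV e b => SV (evert e b)
  | FE f i => SE (side i).1
  | FV f i => SV (corner i)
  end.

(** composition: (edge side i -> endpoint c) o (face f -> side i)
    = (face f -> the corresponding corner of f) *)
Inductive sd_comp : sdE -> sdE -> sdE -> Prop :=
| SdComp (f : Fc K) (i : 'I_(nsides f)) (c : bool) :
    sd_comp (EV (side i).1 c) (FE i)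
            (FV (if c == (side i).2 then i else ordS i)).

Lemma sd_comp_ti a b c : sd_comp a b c -> sd_st b = sd_si a.
Proof. by case. Qed.

Lemma sd_comp_i a b c : sd_comp a b c -> sd_si c = sd_si b.
Proof. by case. Qed.

Lemma sd_comp_t a b c : sd_comp a b c -> sd_st c = sd_st a.
Proof.
case=> f i cc /=; case: eqP => [-> //|ne].
rewrite /corner /ostart -side_closed.
by case: cc ne; case: (side i).2.
Qed.

Definition Sd : scwol :=
  {| sV := sdV; sE := sdE; sdim := sd_dim; si := sd_si; st := sd_st;
     scomp := sd_comp; scomp_ti := sd_comp_ti; scomp_i := sd_comp_i;
     scomp_t := sd_comp_t |}.

End Sd.

Record cgroups (S : scwol) := CGroups {
  cG : sV S -> group;
  cpsi : forall a : sE S, cG (si a) -> cG (st a);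
  ctw : forall a b : sE S, cG (st a) }.  (* g_{a,b}; only used for composable pairs *)

Arguments cG {S}.
Arguments cpsi {S}.
Arguments ctw {S}.

Definition gcast (S : scwol) (G : sV S -> group) (x y : sV S) (e : x = y) :
  G x -> G y := fun g => eq_rect x (fun z => gcar (G z)) g y e.

Definition is_cgroups (S : scwol) (C : cgroups S) : Prop :=
  (forall a, is_mono (cpsi C a)) /\
  (forall a b c (h : scomp a b c) (x : cG C (si c)),
     gconj (ctw C a b) (gcast (scomp_t h) (cpsi C c x)) =
     cpsi C a (gcast (scomp_ti h) (cpsi C b (gcast (scomp_i h) x)))) /\
  (forall a b c ab bc abc (hab : scomp a b ab) (hbc : scomp b c bc)
          (h1 : scomp a bc abc) (h2 : scomp ab c abc),
     gmul (cpsi C a (gcast (scomp_ti hab) (ctw C b c))) (ctw C a bc) =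
     gmul (ctw C a b) (gcast (scomp_t hab) (ctw C ab c))).

Definition Ind_is (S : scwol) (C : cgroups S) (a : sE S) (n : nat) : Prop :=
  index_is (fun y : cG C (st a) => exists x, cpsi C a x = y) n.

Definition v_thick (v : nat) (Y : polycx) (C : cgroups (Sd Y)) : Prop :=
  forall e : Ed Y,
    exists (l : list (sE (Sd Y))) (n : sE (Sd Y) -> nat),
      NoDup l /\
      (forall a, In a l <-> st a = SE e) /\
      (forall a, In a l -> Ind_is C a (n a)) /\
      sumn (map n l) = v.

Record action (G : group) (S : scwol) := Action {
  actV : G -> sV S -> sV S;
  actE : G -> sE S -> sE S }.

Arguments actV {G S}.
Arguments actE {G S}.

(** Action (Bridson--Haefliger III.C.1.11) by dimension-preserving scwol
    automorphisms, without inversions. *)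
Definition is_action (G : group) (S : scwol) (A : action G S) : Prop :=
  (forall x, actV A gone x = x) /\ (forall a, actE A gone a = a) /\
  (forall g h x, actV A (gmul g h) x = actV A g (actV A h x)) /\
  (forall g h a, actE A (gmul g h) a = actE A g (actE A h a)) /\
  (forall g a, si (actE A g a) = actV A g (si a)) /\
  (forall g a, st (actE A g a) = actV A g (st a)) /\
  (forall g a b c, scomp a b c -> scomp (actE A g a) (actE A g b) (actE A g c)) /\
  (forall g x, sdim (actV A g x) = sdim x) /\
  (forall g a, actV A g (si a) <> st a) /\
  (forall g a, actV A g (si a) = si a -> actE A g a = a).

Record smorph (S T : scwol) := SMorph {
  mV : sV S -> sV T;
  mE : sE S -> sE T }.

Arguments mV {S T}.
Arguments mE {S T}.

Definition is_smorph (S T : scwol) (q : smorph S T) : Prop :=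
  (forall a, si (mE q a) = mV q (si a)) /\
  (forall a, st (mE q a) = mV q (st a)) /\
  (forall a b c, scomp a b c -> scomp (mE q a) (mE q b) (mE q c)) /\
  (forall x, sdim (mV q x) = sdim x).

(** [q] identifies T with the quotient scwol G\S. *)
Definition is_quotient (G : group) (S T : scwol) (A : action G S) (q : smorph S T) :=
  (forall g x, mV q (actV A g x) = mV q x) /\
  (forall g a, mE q (actE A g a) = mE q a) /\
  (forall y, exists x, mV q x = y) /\
  (forall b, exists a, mE q a = b) /\
  (forall x x', mV q x = mV q x' -> exists g, actV A g x = x') /\
  (forall a a', mE q a = mE q a' -> exists g, actE A g a = a').

(** [C] is isomorphic to a complex of groups arising (B--H III.C.2.9) from an
    action without inversions of a group Gam on (the subdivision of) a simply
    connected polygonal complex X satisfying [isX]; X is then the universal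
    cover of C.  The induced complex has local groups the stabilisers
    Gam_{lift s}, psi'_a = Ad(h_a), g'_{a,b} = h_a h_b h_{ab}^-1; the
    isomorphism (B--H III.C.2.4) is (phi_s, phiE a) with phi_s : G_s ~= Gam_{lift s}
    (realised as an injective hom into Gam with image the stabiliser). *)
Definition developable_with_cover (Y : polycx) (C : cgroups (Sd Y))
    (isX : polycx -> Prop) : Prop :=
  exists (X : polycx) (Gam : group) (A : action Gam (Sd X))
         (q : smorph (Sd X) (Sd Y))
         (lift : sV (Sd Y) -> sV (Sd X)) (liftE : sE (Sd Y) -> sE (Sd X))
         (h : sE (Sd Y) -> Gam)
         (phi : forall s : sV (Sd Y), cG C s -> Gam) (phiE : sE (Sd Y) -> Gam),
    isX X /\ is_action A /\ is_smorph q /\ is_quotient A q /\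
    (forall s, mV q (lift s) = s) /\
    (forall a, mE q (liftE a) = a /\ si (liftE a) = lift (si a)) /\
    (forall a, actV A (h a) (st (liftE a)) = lift (st a)) /\
    (forall s, is_mono (phi s) /\
       forall g : Gam, actV A g (lift s) = lift s <-> exists x, phi s x = g) /\
    (forall a, actV A (phiE a) (lift (st a)) = lift (st a)) /\
    (forall a (x : cG C (si a)),
       gconj (phiE a) (gconj (h a) (phi (si a) x)) = phi (st a) (cpsi C a x)) /\
    (forall a b c, scomp a b c ->
       gmul (phi (st a) (ctw C a b)) (phiE c) =
       gmul (gmul (phiE a) (gconj (h a) (phiE b)))
            (gmul (gmul (h a) (h b)) (ginv (h c)))).

(* Main.v *)
Require Import Defs.
From HB Require Import structures.
From Stdlib Require Import ClassicalEpsilon List.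
From mathcomp Require Import ssreflect ssrfun ssrbool eqtype ssrnat seq fintype finset.

Set Implicit Arguments.
Unset Strict Implicit.
Unset Printing Implicit Defensive.

Section Grp.
Variable G : group.
Implicit Types x y z : G.

Lemma gmulgV x : gmul x (ginv x) = gone.
Proof.
rewrite -[gmul x (ginv x)]gmul1g -{1}(gmulVg (ginv x)) -gmulA (gmulA (ginv x) x).
by rewrite gmulVg gmul1g gmulVg.
Qed.

Lemma gmulg1 x : gmul x gone = x.
Proof. by rewrite -(gmulVg x) gmulA gmulgV gmul1g. Qed.

Lemma gmulKg x y : gmul (ginv x) (gmul x y) = y.
Proof. by rewrite gmulA gmulVg gmul1g. Qed.

Lemma gmulVKg x y : gmul x (gmul (ginv x) y) = y.
Proof. by rewrite gmulA gmulgV gmul1g. Qed.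

Lemma ginv_r x y : gmul x y = gone -> y = ginv x.
Proof. by move=> H; rewrite -(gmulKg x y) H gmulg1. Qed.

Lemma ginv_l x y : gmul y x = gone -> y = ginv x.
Proof. by move=> H; rewrite -(gmulg1 y) -(gmulgV x) gmulA H gmul1g. Qed.

Lemma ginvM x y : ginv (gmul x y) = gmul (ginv y) (ginv x).
Proof.
symmetry; apply: ginv_r.
by rewrite -gmulA (gmulA y) gmulgV gmul1g gmulgV.
Qed.

Lemma gconj_comp x y z : gconj x (gconj y z) = gconj (gmul x y) z.
Proof. by rewrite /gconj ginvM !gmulA. Qed.

Lemma gconj_V x y : gconj x (gmul (gmul (ginv x) y) x) = y.
Proof. by rewrite /gconj !gmulA gmulgV gmul1g -gmulA gmulgV gmulg1. Qed.

End Grp.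

Lemma hom1 (G H : group) (f : G -> H) : is_hom f -> f gone = gone.
Proof.
move=> Hf; have E : gmul (f gone) (f gone) = f gone by rewrite -Hf gmul1g.
by rewrite -(gmulKg (f gone) (f gone)) E gmulVg.
Qed.

Lemma homV (G H : group) (f : G -> H) x : is_hom f -> f (ginv x) = ginv (f x).
Proof.
move=> Hf; apply: ginv_l; by rewrite -Hf gmulVg (hom1 Hf).
Qed.

Definition ceq (B : Type) (x y : B) : bool :=
  if excluded_middle_informative (x = y) then true else false.

Lemma ceqP (B : Type) : Equality.axiom (@ceq B).
Proof.
move=> x y; rewrite /ceq; case: excluded_middle_informative => H.
  by constructor. by constructor.
Qed.

Definition clT (B : Type) : Type := B.
HB.instance Definition _ (B : Type) := hasDecEq.Build (clT B) (@ceqP B).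

Lemma In_mem (T : eqType) (s : seq T) x : List.In x s <-> x \in s.
Proof.
elim: s => [|y s IH] //=; rewrite in_cons; split.
  by case=> [->|/IH ->]; rewrite ?eqxx ?orbT.
by case/orP=> [/eqP->|/IH]; [left|right].
Qed.

Lemma uniq_NoDup (T : eqType) (s : seq T) : uniq s -> List.NoDup s.
Proof.
elim: s => [|y s IH] /=; first by move=> _; constructor.
by case/andP=> ns us; constructor; [move=> /In_mem H; by rewrite H in ns|apply: IH].
Qed.

Lemma card_count v (P : pred 'I_v) : #|[set k | P k]| = count P (enum 'I_v).
Proof. rewrite cardsE cardE /enum_mem size_filter /enum_mem (eq_filter (a2:=predT)) ?filter_predT //. Qed.

Lemma fiber_count (B : Type) v (pi : 'I_v -> B) :
  exists l : list B, List.NoDup l /\ (forall b, List.In b l <-> exists k, pi k = b) /\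
   sumn (map (fun b => #|[set k | ceq (pi k) b]|) l) = v.
Proof.
pose s := map (pi : 'I_v -> clT B) (enum 'I_v).
exists (undup s); split; first exact: (uniq_NoDup (undup_uniq s)).
split.
  move=> b; rewrite (In_mem (T:=clT B)) mem_undup; split.
    by case/mapP=> k _ ->; exists k.
  by case=> k <-; apply: map_f; rewrite mem_enum.
have E : forall b : clT B, #|[set k | ceq (pi k) b]| = count_mem b s.
  move=> b; rewrite card_count /s [in RHS]count_map. done.
rewrite (eq_map E).
transitivity (size s); last by rewrite size_map size_enum_ord.
rewrite -(perm_size (perm_count_undup s)) size_flatten /shape -map_comp.
by apply: congr1; apply: eq_map => b /=; rewrite size_nseq.
Qed.

Lemma lab_lemma v (b0 : bool) (j0 k : 'I_v) (l1 l2 : bool * 'I_v) :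
  l1.1 <> l2.1 ->
  (if l1.1 then (l2.2, l1.2) else (l1.2, l2.2)) = (if b0 then (k, j0) else (j0, k)) ->
  l1 = (b0, j0) \/ l2 = (b0, j0).
Proof.
case: l1 l2 => [[] i1] [[] i2] //= _; case: b0 => [] [E1 E2]; subst; auto.
Qed.

Lemma lab_lemma2 v (b0 : bool) (j0 : 'I_v) (l1 l2 : bool * 'I_v) :
  l1.1 <> l2.1 -> (l1 = (b0, j0) \/ l2 = (b0, j0)) ->
  let K := (if l1.1 then (l2.2, l1.2) else (l1.2, l2.2)) in
  K = (if b0 then (if b0 then K.1 else K.2, j0) else (j0, if b0 then K.1 else K.2)).
Proof.
case: l1 l2 => [[] i1] [[] i2] //= _; case: b0 => [] [] H; case: H => *; subst => //.
Qed.

Definition fe_proj (X : polycx) (a : sdE X) : option {f : Fc X & 'I_(nsides f)} :=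
  match a with FE f i => Some (existT _ f i) | _ => None end.

Definition sig_pred (X : polycx) (c : {f : Fc X & 'I_(nsides f)}) : {f : Fc X & 'I_(nsides f)} :=
  existT _ (projT1 c) (ord_pred (projT2 c)).

Definition sig_side (X : polycx) (c : {f : Fc X & 'I_(nsides f)}) : Ed X * bool :=
  side (projT2 c).

Lemma sigT_eta (X : polycx) (c : {f : Fc X & 'I_(nsides f)}) :
  existT _ (projT1 c) (projT2 c) = c.
Proof. by case: c. Qed.

Lemma edge_star (X : polycx) v (e : Ed X) : link_Kvv v (evert e false) ->
  exists E : 'I_v -> sdE X, injective E /\ (forall k, sd_st (E k) = SE e) /\
    (forall a, sd_st a = SE e -> exists k, E k = a).
Proof.
move=> [phi [Hinj [Hsurj Hrest]]]; cbv zeta in Hrest.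
move: Hrest => [Hne [Hkey Hks]].
set x := evert e false.
pose o := (e, false).
have ox : ostart o = x by [].
case Hpo : (phi o) => [b0 j0].
pose mk (k : 'I_v) := if b0 then (k, j0) else (j0, k).
have Hc : forall k, {c : {f : Fc X & 'I_(nsides f)} | oend (side (projT2 c)) = x /\
   (if (phi (oflip (side (projT2 c)))).1
    then ((phi (side (ordS (projT2 c)))).2, (phi (oflip (side (projT2 c)))).2)
    else ((phi (oflip (side (projT2 c)))).2, (phi (side (ordS (projT2 c)))).2)) = mk k}.
  by move=> k; apply: constructive_indefinite_description; apply: Hks.
pose cc k := proj1_sig (Hc k).
pose E k := if phi (oflip (side (projT2 (cc k)))) == phi o
            then FE (projT2 (cc k)) else FE (ordS (projT2 (cc k))).
have Hcx k : oend (side (projT2 (cc k))) = x by rewrite /cc; case: (Hc k) => c [].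
have Hck k : (if (phi (oflip (side (projT2 (cc k))))).1
    then ((phi (side (ordS (projT2 (cc k))))).2, (phi (oflip (side (projT2 (cc k))))).2)
    else ((phi (oflip (side (projT2 (cc k))))).2, (phi (side (ordS (projT2 (cc k))))).2)) = mk k.
  by rewrite /cc; case: (Hc k) => c [].
have Hne' : forall c : {f : Fc X & 'I_(nsides f)}, oend (side (projT2 c)) = x ->
    (phi (oflip (side (projT2 c)))).1 <> (phi (side (ordS (projT2 c)))).1.
  by move=> c; apply: (Hne c).
have Hst1 : forall f (i : 'I_(nsides f)), oend (side i) = x -> ostart (oflip (side i)) = x by [].
have Hst2 : forall f (i : 'I_(nsides f)), oend (side i) = x -> ostart (side (ordS i)) = x.
  by move=> f i <-; rewrite /ostart /oend side_closed.
have HE1 k : phi (oflip (side (projT2 (cc k)))) = phi o -> oflip (side (projT2 (cc k))) = o.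
  by move=> H; apply: Hinj => //; apply: Hst1; apply: Hcx.
have HE2 k : phi (side (ordS (projT2 (cc k)))) = phi o -> side (ordS (projT2 (cc k))) = o.
  by move=> H; apply: Hinj => //; apply: Hst2; apply: Hcx.
have Hor k : phi (oflip (side (projT2 (cc k)))) = phi o \/ phi (side (ordS (projT2 (cc k)))) = phi o.
  by rewrite Hpo; apply: (lab_lemma (k:=k)); [apply: Hne'; apply: Hcx | apply: Hck].
have mkinj : injective mk.
  by move=> k k'; rewrite /mk; case: (b0) => [] [].
exists E; split; [|split].
- move=> k k'; rewrite /E.
  case: eqP => H1; case: eqP => H2 /(congr1 (@fe_proj X))/Some_inj Hs.
  + rewrite !sigT_eta in Hs; apply: mkinj; by rewrite -Hck -Hck Hs.
  + have := congr1 (@sig_side X) Hs; rewrite /sig_side /= => Hs'.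
    have H2' : side (ordS (projT2 (cc k'))) = o by case: (Hor k') => // /HE2.
    by have := HE1 _ H1; rewrite Hs' H2' => -[].
  + have := congr1 (@sig_side X) Hs; rewrite /sig_side /= => Hs'.
    have H1' : side (ordS (projT2 (cc k))) = o by case: (Hor k) => // /HE2.
    by have := HE1 _ H2; rewrite -Hs' H1' => -[].
  + have := congr1 (@sig_pred X) Hs; rewrite /sig_pred /= !ordSK !sigT_eta => Hs'.
    apply: mkinj; by rewrite -Hck -Hck Hs'.
- move=> k; rewrite /E; case: eqP => H /=.
    by move: (congr1 fst (HE1 _ H)) => /= ->.
  case: (Hor k) => // H'; by move: (congr1 fst (HE2 _ H')) => /= ->.
- case=> [e' b|f i|f i] //= [He].
  have Hkey' : forall c : {f : Fc X & 'I_(nsides f)}, oend (side (projT2 c)) = x ->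
      (phi (oflip (side (projT2 c))) = phi o \/ phi (side (ordS (projT2 c))) = phi o) ->
      exists k, cc k = c.
    move=> c Hcx0 Hl; rewrite Hpo in Hl.
    have := lab_lemma2 (Hne' c Hcx0) Hl => /= Hk.
    move: Hk; set K := (X in X = _) => Hk.
    exists (if b0 then K.1 else K.2); symmetry.
    apply: (Hkey c (cc _) Hcx0 (Hcx _)); rewrite Hck; exact: Hk.
  case Hb : (side i).2.
  + have Hsi : side i = oflip o by rewrite (surjective_pairing (side i)) He Hb.
    have [k Hk] := Hkey' (existT _ f i) (etrans (f_equal (@oend X) Hsi) erefl)
       (or_introl (f_equal phi (etrans (f_equal (@oflip X) Hsi) erefl))).
    exists k; rewrite /E Hk /=.
    by rewrite Hsi eqxx.
  + have Hsi : side i = o by rewrite (surjective_pairing (side i)) He Hb.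
    have Hx0 : oend (side (ord_pred i)) = x.
      by rewrite /oend side_closed ord_predK -/(ostart (side i)) Hsi.
    have [k Hk] := Hkey' (existT _ f (ord_pred i)) Hx0
       (or_intror (f_equal phi (etrans (f_equal (@side X f) (ord_predK i)) Hsi))).
    exists k; rewrite /E Hk /=.
    case: eqP => H; last by rewrite ord_predK.
    exfalso; apply: (Hne' (existT _ f (ord_pred i)) Hx0) => /=.
    by rewrite H ord_predK Hsi.
Qed.

Unset Implicit Arguments.

Section Main.
Variables (v : nat) (Y : polycx) (C : cgroups (Sd Y)) (X : polycx) (Gam : group)
  (A : action Gam (Sd X)) (q : smorph (Sd X) (Sd Y))
  (lift : sV (Sd Y) -> sV (Sd X)) (liftE : sE (Sd Y) -> sE (Sd X))
  (h : sE (Sd Y) -> Gam) (phi : forall s : sV (Sd Y), cG C s -> Gam) (phiE : sE (Sd Y) -> Gam).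
Hypothesis HX : forall x : Vt X, link_Kvv v x.
Hypothesis aE1 : forall a, actE A gone a = a.
Hypothesis aVM : forall g k x, actV A (gmul g k) x = actV A g (actV A k x).
Hypothesis aEM : forall g k a, actE A (gmul g k) a = actE A g (actE A k a).
Hypothesis aV1 : forall x, actV A gone x = x.
Hypothesis asi : forall g a, si (actE A g a) = actV A g (si a).
Hypothesis ast : forall g a, st (actE A g a) = actV A g (st a).
Hypothesis anoinv : forall g a, actV A g (si a) = si a -> actE A g a = a.
Hypothesis qst : forall a, st (mE q a) = mV q (st a).
Hypothesis qdim : forall x, sdim (mV q x) = sdim x.
Hypothesis qE : forall g a, mE q (actE A g a) = mE q a.
Hypothesis qorb : forall a a', mE q a = mE q a' -> exists g, actE A g a = a'.
Hypothesis hlift : forall s, mV q (lift s) = s.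
Hypothesis hliftE : forall a, mE q (liftE a) = a /\ si (liftE a) = lift (si a).
Hypothesis hh : forall a, actV A (h a) (st (liftE a)) = lift (st a).
Hypothesis hphi : forall s, is_mono (phi s) /\
       forall g : Gam, actV A g (lift s) = lift s <-> exists x, phi s x = g.
Hypothesis hphiE : forall a, actV A (phiE a) (lift (st a)) = lift (st a).
Hypothesis hconj : forall a (x : cG C (si a)),
       gconj (phiE a) (gconj (h a) (phi (si a) x)) = phi (st a) (cpsi C a x).

Lemma actE_V g a : actE A (ginv g) (actE A g a) = a.
Proof. by rewrite -aEM gmulVg aE1. Qed.

Lemma actE_conj g y t : actE A (gconj g y) (actE A g t) = actE A g (actE A y t).
Proof. by rewrite /gconj !aEM actE_V. Qed.

Definition ka a := gmul (phiE a) (h a).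
Definition alift a := actE A (ka a) (liftE a).

Lemma alift_st a : st (alift a) = lift (st a).
Proof. by rewrite /alift ast /ka aVM hh hphiE. Qed.

Lemma alift_q a : mE q (alift a) = a.
Proof. by rewrite /alift qE (hliftE a).1. Qed.

Lemma key_stab a (z : cG C (st a)) :
  (exists x, cpsi C a x = z) <-> actE A (phi (st a) z) (alift a) = alift a.
Proof.
split.
- case=> x <-; rewrite -hconj /alift /ka aEM actE_conj actE_conj.
  congr (actE A _ (actE A _ _)); apply: anoinv.
  rewrite (hliftE a).2; apply/(hphi (si a)).2; by exists x.
- move=> Hz.
  pose w := gmul (gmul (ginv (ka a)) (phi (st a) z)) (ka a).
  have Hw : actE A w (liftE a) = liftE a.
    by rewrite /w (aEM _ (ka a)) (aEM (ginv (ka a))) -/(alift a) Hz /alift actE_V.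
  have : actV A w (lift (si a)) = lift (si a).
    by rewrite -(hliftE a).2 -asi Hw.
  move=> /(hphi (si a)).2 [x Hx]; exists x.
  apply: (hphi (st a)).1.2; rewrite -hconj Hx /w gconj_comp.
  exact: gconj_V.
Qed.

Lemma actE_Vr g a : actE A g (actE A (ginv g) a) = a.
Proof. by rewrite -aEM gmulgV aE1. Qed.

Lemma ind_a (a : sE (Sd Y)) (e' : Ed X) (E : 'I_v -> sE (Sd X)) :
  lift (st a) = (SE e' : sV (Sd X)) -> injective E -> (forall k, st (E k) = (SE e' : sV (Sd X))) ->
  (forall a0, st a0 = (SE e' : sV (Sd X)) -> exists k, E k = a0) ->
  Ind_is C a #|[set k | ceq (mE q (E k)) a]|.
Proof.
move=> Hl Einj Est Esur.
set F := [set k | ceq (mE q (E k)) a].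
have HF : forall k, k \in F -> mE q (E k) = a by move=> k; rewrite inE => /ceqP.
have Hg : forall i : 'I_#|F|, exists y : cG C (st a),
    actE A (phi (st a) y) (alift a) = E (enum_val i).
  move=> i; have Hk := HF _ (enum_valP i).
  have [g Hg] := qorb (alift a) (E (enum_val i)) (etrans (alift_q a) (esym Hk)).
  have : actV A g (lift (st a)) = lift (st a) by rewrite -{1}alift_st -ast Hg Est Hl.
  move=> /(hphi (st a)).2 [y Hy]; exists y; by rewrite Hy.
pose r i := proj1_sig (constructive_indefinite_description _ (Hg i)).
have Hr i : actE A (phi (st a) (r i)) (alift a) = E (enum_val i).
  exact: (proj2_sig (constructive_indefinite_description _ (Hg i))).
have phom := (hphi (st a)).1.1.
exists r; split.
- move=> y.
  have Hy : actV A (phi (st a) y) (lift (st a)) = lift (st a).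
    by apply/(hphi (st a)).2; exists y.
  have [k Hk] : exists k, E k = actE A (phi (st a) y) (alift a).
    by apply: Esur; rewrite ast alift_st Hy Hl.
  have kF : k \in F by rewrite inE; apply/ceqP; rewrite Hk qE alift_q.
  exists (enum_rank_in kF k); apply/key_stab.
  have Hk' := Hr (enum_rank_in kF k); rewrite enum_rankK_in // in Hk'.
  by rewrite phom (homV _ phom) aEM -Hk -Hk' actE_V.
- move=> i j /key_stab; rewrite phom (homV _ phom) aEM Hr => H.
  apply: enum_val_inj; apply: Einj.
  by rewrite -(Hr i) -H actE_Vr.
Qed.

Lemma thick_e (e : Ed Y) : exists (l : list (sE (Sd Y))) (n : sE (Sd Y) -> nat),
  List.NoDup l /\ (forall a, List.In a l <-> st a = SE e) /\
  (forall a, List.In a l -> Ind_is C a (n a)) /\ sumn (map n l) = v.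
Proof.
have [e' He'] : exists e', lift (SE e) = SE e'.
  have := qdim (lift (SE e)); rewrite hlift.
  case: (lift (SE e)) => [x|e'|f] /= H; [discriminate|by exists e'|discriminate].
have [E [Einj [Est Esur]]] := edge_star (HX (evert e' false)).
have Est' : forall k, st (E k : sE (Sd X)) = (SE e' : sV (Sd X)) := Est.
have Esur' : forall a0 : sE (Sd X), st a0 = (SE e' : sV (Sd X)) -> exists k, E k = a0 := Esur.
have [l [Hnd [Hin Hsum]]] := fiber_count (fun k => mE q (E k)).
have Hiff : forall a, List.In a l <-> st a = SE e.
  move=> a; rewrite Hin; split.
  + by case=> k <-; rewrite qst Est' -He' hlift.
  + move=> Ha; have [k Hk] := Esur' (alift a) (etrans (alift_st a) (etrans (f_equal lift Ha) He')).
    by exists k; rewrite Hk alift_q.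
exists l, (fun b => #|[set k | ceq (mE q (E k)) b]|); split => //; split => //; split => //.
move=> a /Hiff Ha; apply: (ind_a a e' E _ Einj Est' Esur').
by rewrite Ha.
Qed.

End Main.

Theorem lemma4p3 (p v : nat) (Y : polycx) (C : cgroups (Sd Y)) :
  5 <= p -> 2 <= v ->
  is_cgroups C ->
  developable_with_cover C (is_bourdon p v) ->
  v_thick v C.
Proof.
move=> Hp Hv HC [X [Gam [A [q [lift [liftE [h [phi [phiE [HXb [Hact [Hsm [Hquo
  [Hl1 [Hl2 [Hh [Hph [HphE [Hconj Htw]]]]]]]]]]]]]]]]]]].
move: Hact => [a1 [a2 [a3 [a4 [a5 [a6 [a7 [a8 [a9 a10]]]]]]]]].
move: Hsm => [qsi [qst [qcomp qdim]]].
move: Hquo => [qV [qE [qsV [qsE [qorbV qorb]]]]].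
move: HXb => [_ [_ [_ [_ [HX _]]]]].
move=> e; eapply thick_e; eassumption.
Qed.
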